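(* Let $\nu$ and $\nu'$ be discrete distributions supported on a total of $\ell$ atoms in $[-1,1]$. If $|m_i(\nu)-m_i(\nu')|\le\delta$ for $i=1,\dots,\ell-1$, then \[W_1(\nu,\nu')\le O\big(\ell\delta^{\frac{1}{\ell-1}}\big).\]
   Context: $m_i(\pi)=\mathbb{E}_\pi X^i$; ''supported on a total of $\ell$ atoms'' means the union of the supports has $\ell$ points. $W_1$ is the 1-Wasserstein distance on $\mathbb{R}$; $O(\cdot)$ hides an absolute constant. *)

(* Defs.v *)
From HB Require Import structures.
From mathcomp Require Import all_boot all_order all_algebra.
From mathcomp Require Import boolp classical_sets reals exp.
Set Implicit Arguments. Unset Strict Implicit. Unset Printing Implicit Defensive.
Import Order.TTheory GRing.Theory Num.Theory.
Local Open Scope ring_scope.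
Local Open Scope classical_set_scope.

(* A discrete distribution on the atoms x : 'I_l -> R is a weight vector
   p : 'I_l -> R, nonnegative and summing to one. *)
Definition is_prob {R : realType} (l : nat) (p : 'I_l -> R) : Prop :=
  (forall j, 0 <= p j) /\ \sum_(j < l) p j = 1.

Definition moment {R : realType} (l : nat) (x p : 'I_l -> R) (i : nat) : R :=
  \sum_(j < l) p j * x j ^+ i.

Definition is_coupling {R : realType} (l : nat) (p q : 'I_l -> R)
  (pi : 'I_l -> 'I_l -> R) : Prop :=
  (forall j k, 0 <= pi j k) /\
  (forall j, \sum_(k < l) pi j k = p j) /\
  (forall k, \sum_(j < l) pi j k = q k).

Definition W1 {R : realType} (l : nat) (x p q : 'I_l -> R) : R :=
  inf [set c : R | exists pi, is_coupling p q pi /\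
         c = \sum_(j < l) \sum_(k < l) pi j k * `|x j - x k| ].

(* Main.v *)
Require Import Defs.
From HB Require Import structures.
From mathcomp Require Import all_boot all_order all_algebra.
From mathcomp Require Import boolp classical_sets reals exp.
From mathcomp Require Import polyrcf fingroup perm.
From mathcomp Require Import lra ring.
Import Order.TTheory GRing.Theory Num.Theory.
Local Open Scope ring_scope.
Set Implicit Arguments. Unset Strict Implicit. Unset Printing Implicit Defensive.


Ltac mm := rewrite ?/Num.max ?/Num.min ?/Order.max ?/Order.min;
  repeat match goal with |- context[if ?a < ?b then _ else _] =>
    lazymatch a with context[if _ then _ else _] => fail | _ =>
    lazymatch b with context[if _ then _ else _] => fail | _ => case: (ltP a b) => ? end end end.


Section Ov.
Variable R : realType.
Definition ov (a b c d : R) := Num.max 0 (Num.min b d - Num.max a c).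

Lemma ov_split a b c d e : c <= d -> d <= e -> ov a b c d + ov a b d e = ov a b c e.
Proof. move=> cd de; rewrite /ov; mm; lra. Qed.
Lemma ov_sym a b c d : ov a b c d = ov c d a b.
Proof. rewrite /ov; mm; lra. Qed.
Lemma ov_ge0 a b c d : 0 <= ov a b c d.
Proof. rewrite /ov; mm; lra. Qed.
Lemma ov_id a b c : ov a b c c = 0.
Proof. rewrite /ov; mm; lra. Qed.
Lemma ov_in a b c d : c <= a -> a <= b -> b <= d -> ov a b c d = b - a.
Proof. move=> *; rewrite /ov; mm; lra. Qed.
Lemma ov_0P a b : 0 <= a -> a <= 1 -> 0 <= b -> b <= 1 -> ov a 1 0 b = Num.max 0 (b - a).
Proof. move=> *; rewrite /ov; mm; lra. Qed.
End Ov.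


Section Sums.
Variable R : realType.

Lemma mono_nat (F : nat -> R) : (forall i, F i <= F i.+1) -> forall i j, (i <= j)%N -> F i <= F j.
Proof.
move=> h i j /subnK <-; elim: (j - i)%N => [|d ih]; first by rewrite add0n.
by rewrite addSn; apply: le_trans ih (h _).
Qed.

Lemma ov_sum a b (F : nat -> R) s t : (forall i, F i <= F i.+1) -> (s <= t)%N ->
  \sum_(s <= i < t) ov a b (F i) (F i.+1) = ov a b (F s) (F t).
Proof.
move=> h; elim: t => [|t ih].
  by rewrite leqn0 => /eqP ->; rewrite big_geq // ov_id.
rewrite leq_eqVlt => /orP [/eqP ->|st]; first by rewrite big_geq // ov_id.
rewrite big_nat_recr //= ih // ov_split //; exact: mono_nat.
Qed.

Lemma sum_ind (G : nat -> R) j k N : (j <= k)%N -> (k <= N)%N ->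
  \sum_(0 <= m < N) ((j <= m)%N%:R * (m < k)%N%:R * G m) = \sum_(j <= m < k) G m.
Proof.
move=> jk kN.
rewrite (@big_cat_nat _ _ _ j 0 N) //=; last exact: leq_trans jk kN.
rewrite (@big_cat_nat _ _ _ k j N) //=.
rewrite big1_seq; last first.
  move=> i /andP [_]; rewrite mem_index_iota => /andP [_ ij].
  by rewrite leqNgt ij /= mul0r mul0r.
rewrite [X in _ + (_ + X)]big1_seq; last first.
  move=> i /andP [_]; rewrite mem_index_iota => /andP [ki _].
  by rewrite ltnNge ki /= mulr0 mul0r.
rewrite add0r addr0; apply: eq_big_nat => i /andP [ji ik].
by rewrite ji ik !mul1r.
Qed.
End Sums.

Section Cross.
Variable R : realType.
Lemma crossing (F G : nat -> R) N m :
  (forall i, F i <= F i.+1) -> (forall i, G i <= G i.+1) ->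
  F 0%N = 0 -> G 0%N = 0 -> G N.+1 = 1 ->
  (forall k, 0 <= F k) -> (forall k, (k <= N.+1)%N -> F k <= 1) ->
  (forall k, 0 <= G k) -> (forall k, (k <= N.+1)%N -> G k <= 1) ->
  (m < N)%N ->
  \sum_(0 <= j < N.+1) \sum_(0 <= k < N.+1)
     (ov (F j) (F j.+1) (G k) (G k.+1) * ((j <= m)%N%:R * (m < k)%N%:R))
  = Num.max 0 (F m.+1 - G m.+1).
Proof.
move=> mF mG F0 G0 G1 F0k F1k G0k G1k mN.
have step1 : forall j, \sum_(0 <= k < N.+1)
     (ov (F j) (F j.+1) (G k) (G k.+1) * ((j <= m)%N%:R * (m < k)%N%:R))
   = (j <= m)%N%:R * ov (F j) (F j.+1) (G m.+1) (G N.+1).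
  move=> j.
  have -> : \sum_(0 <= k < N.+1)
     (ov (F j) (F j.+1) (G k) (G k.+1) * ((j <= m)%N%:R * (m < k)%N%:R))
    = (j <= m)%N%:R * \sum_(0 <= k < N.+1) ((m.+1 <= k)%N%:R * (k < N.+1)%N%:R
         * ov (F j) (F j.+1) (G k) (G k.+1)).
    rewrite mulr_sumr; apply: eq_big_nat => k /andP [_ kN].
    by rewrite kN mulr1 mulrC mulrA.
  rewrite sum_ind //; last exact: leqW.
  by rewrite (@ov_sum _ _ _ G _ _ mG) // ltnS ltnW.
rewrite (eq_big_nat _ _ (fun j _ => step1 j)).
have -> : \sum_(0 <= i < N.+1) (i <= m)%N%:R * ov (F i) (F i.+1) (G m.+1) (G N.+1)
   = \sum_(0 <= i < N.+1) ((0 <= i)%N%:R * (i < m.+1)%N%:R * ov (G m.+1) (G N.+1) (F i) (F i.+1)).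
  by apply: eq_big_nat => i _; rewrite mul1r ltnS ov_sym.
rewrite sum_ind //; last by rewrite ltnS ltnW.
have hm : (m.+1 <= N.+1)%N by rewrite ltnS ltnW.
rewrite (@ov_sum _ _ _ F _ _ mF) // F0 G1 ov_0P // ?G0k ?F0k ?G1k ?F1k //.
Qed.
End Cross.

Lemma max0_abs (R : realType) (d : R) : Num.max 0 d + Num.max 0 (- d) = `|d|.
Proof.
case: (lerP 0 d) => h; [rewrite ger0_norm // | rewrite ltr0_norm //]; mm; lra.
Qed.

Section Coupling.
Variables (R : realType) (n : nat) (x p q : 'I_n.+1 -> R).
Hypotheses (pp : is_prob p) (pq : is_prob q)
  (xm : forall i j : 'I_n.+1, (i <= j)%N -> x i <= x j).

Definition cum (f : 'I_n.+1 -> R) (k : nat) := \sum_(0 <= j < k) f (inord j).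

Lemma sumI (f : 'I_n.+1 -> R) : \sum_(i < n.+1) f i = \sum_(0 <= j < n.+1) f (inord j).
Proof. by rewrite big_mkord; apply: eq_bigr => i _; rewrite inord_val. Qed.

Lemma cum_mono f : is_prob f -> forall k, cum f k <= cum f k.+1.
Proof. by move=> [f0 _] k; rewrite /cum big_nat_recr //= lerDl. Qed.

Lemma cum0 f : cum f 0 = 0.
Proof. by rewrite /cum big_geq. Qed.

Lemma cum1 f : is_prob f -> cum f n.+1 = 1.
Proof. by move=> [_ f1]; rewrite /cum -sumI. Qed.

Lemma cum_ge0 f : is_prob f -> forall k, 0 <= cum f k.
Proof. by move=> [f0 _] k; rewrite /cum sumr_ge0. Qed.

Lemma cum_le1 f : is_prob f -> forall k, (k <= n.+1)%N -> cum f k <= 1.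
Proof. by move=> hf k kn; rewrite -(cum1 hf); apply: mono_nat => //; exact: cum_mono. Qed.

Lemma cumS f k : cum f k.+1 - cum f k = f (inord k).
Proof. by rewrite /cum big_nat_recr //= addrAC subrr add0r. Qed.

Definition pic (j k : 'I_n.+1) : R :=
  ov (cum p j) (cum p j.+1) (cum q k) (cum q k.+1).

Lemma rowsum f g (hf : is_prob f) (hg : is_prob g) (j : 'I_n.+1) :
  \sum_(k < n.+1) ov (cum f j) (cum f j.+1) (cum g k) (cum g k.+1) = f j.
Proof.
rewrite -(big_mkord xpredT (fun k => ov (cum f j) (cum f j.+1) (cum g k) (cum g k.+1))).
rewrite (@ov_sum _ _ _ (cum g) _ _ (cum_mono hg)) // cum0 cum1 // ov_in //.
- by rewrite cumS inord_val.
- exact: cum_ge0.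
- exact: cum_mono.
- exact: cum_le1.
Qed.

Lemma pic_coupling : is_coupling p q pic.
Proof.
split; first by move=> j k; exact: ov_ge0.
split; first by move=> j; rewrite /pic rowsum.
move=> k; rewrite /pic.
under eq_bigr => j _ do rewrite ov_sym.
by rewrite rowsum.
Qed.

Definition gap (m : nat) := x (inord m.+1) - x (inord m).

Lemma abs_form (j k : 'I_n.+1) : `|x j - x k| =
  \sum_(0 <= m < n) (((j <= m)%N%:R * (m < k)%N%:R + (k <= m)%N%:R * (m < j)%N%:R) * gap m).
Proof.
wlog jk : j k / (j <= k)%N.
  move=> h; case: (leqP j k) => jk; first exact: h.
  rewrite distrC (h k j (ltnW jk)).
  apply: eq_bigr => m _; by rewrite addrC.
under eq_bigr => m _ do rewrite mulrDl.
rewrite big_split /= [X in _ = _ + X]big1 ?addr0; last first.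
  move=> m _; case: (leqP k m) => km; last by rewrite mul0r mul0r.
  by rewrite ltnNge (leq_trans jk km) /= mulr0 mul0r.
have kn : (k <= n)%N by rewrite -ltnS.
rewrite (sum_ind gap jk kn) /gap.
rewrite (telescope_sumr (fun i => x (inord i))) // !inord_val.
by rewrite distrC ger0_norm // subr_ge0 xm.
Qed.
Lemma pic_cost : \sum_(j < n.+1) \sum_(k < n.+1) pic j k * `|x j - x k| =
  \sum_(0 <= m < n) gap m * `|cum p m.+1 - cum q m.+1|.
Proof.
under eq_bigr => j _ do under eq_bigr => k _ do rewrite abs_form mulr_sumr.
under eq_bigr => j _ do rewrite exchange_big.
rewrite exchange_big; apply: eq_big_nat => m /andP [_ mn].
have E : forall j k : 'I_n.+1, pic j k *
   (((j <= m)%N%:R * (m < k)%N%:R + (k <= m)%N%:R * (m < j)%N%:R) * gap m)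
   = gap m * (pic j k * ((j <= m)%N%:R * (m < k)%N%:R))
     + gap m * (pic j k * ((k <= m)%N%:R * (m < j)%N%:R)).
  by move=> j k; ring.
under eq_bigr => j _ do under eq_bigr => k _ do rewrite E.
under eq_bigr => j _ do rewrite big_split /= -!mulr_sumr.
rewrite big_split /= -!mulr_sumr -mulrDr; congr (_ * _).
rewrite -max0_abs opprB; congr (_ + _).
  rewrite -(@crossing _ (cum p) (cum q) n m) //;
  try solve [exact: (cum_le1 pq) | exact: (cum_le1 pp) | exact: (cum_ge0 pq) |
    exact: (cum_ge0 pp) | exact: (cum1 pq) | exact: cum0 | exact: (cum_mono pq) | exact: (cum_mono pp)].
  rewrite big_mkord; apply: eq_bigr => j _; rewrite big_mkord; exact: eq_bigr.
rewrite exchange_big /=.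
rewrite -(@crossing _ (cum q) (cum p) n m) //;
  try solve [exact: (cum_le1 pq) | exact: (cum_le1 pp) | exact: (cum_ge0 pq) |
    exact: (cum_ge0 pp) | exact: (cum1 pp) | exact: cum0 | exact: (cum_mono pq) | exact: (cum_mono pp)].
rewrite big_mkord; apply: eq_bigr => j _; rewrite big_mkord; apply: eq_bigr => k _.
by rewrite /pic ov_sym.
Qed.
End Coupling.


Section Nrm.
Variable R : realType.
Implicit Types (P Q : {poly R}).

Definition nrm P := \sum_(i < size P) `|P`_i|.

Lemma nrm_pad P N : (size P <= N)%N -> \sum_(i < N) `|P`_i| = nrm P.
Proof.
move=> h; rewrite /nrm (big_ord_widen N (fun i => `|P`_i|) h) [RHS]big_mkcond /=.
apply: eq_bigr => i _; case: ifP => // /negbT; rewrite -leqNgt => hi.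
by rewrite nth_default // normr0.
Qed.

Lemma nrm_ge0 P : 0 <= nrm P.
Proof. by rewrite sumr_ge0. Qed.

Lemma nrm_scale a P : nrm (a *: P) = `|a| * nrm P.
Proof.
rewrite -(nrm_pad (size_scale_leq a P)) /nrm mulr_sumr.
by apply: eq_bigr => i _; rewrite coefZ normrM.
Qed.

Lemma nrm_mulXsubC P c : nrm (('X - c%:P) * P) <= (1 + `|c|) * nrm P.
Proof.
have hs : (size ((('X - c%:P) * P)%R) <= (size P).+1)%N.
  by apply: leq_trans (size_polyMleq _ _) _; rewrite size_XsubC.
rewrite -(nrm_pad hs).
under eq_bigr => i _ do rewrite mulrBl coefB coefXM coefCM.
apply: le_trans (ler_sum _ (fun i _ => ler_normB _ _)) _.
rewrite big_split /= mulrDl mul1r; apply: lerD.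
  by rewrite big_ord_recl /= normr0 add0r /nrm; apply: ler_sum => i _; rewrite add0n.
rewrite -(nrm_pad (leqnSn (size P))) mulr_sumr.
by apply: ler_sum => i _; rewrite normrM.
Qed.

Lemma nrm_prod (rs : seq R) : (forall c, c \in rs -> `|c| <= 1) ->
  nrm (\prod_(c <- rs) ('X - c%:P)) <= 2 ^+ (size rs).
Proof.
elim: rs => [|c rs ih] h.
  by rewrite big_nil /nrm size_poly1 big_ord1 coef1 /= normr1.
rewrite big_cons /= exprS.
apply: le_trans (nrm_mulXsubC _ _) _.
apply: ler_pM; [by rewrite addr_ge0 | exact: nrm_ge0 | | ].
  by have := h c (mem_head _ _); lra.
by apply: ih => d hd; apply: h; rewrite in_cons hd orbT.
Qed.

Definition antid Q := \poly_(i < (size Q).+1) (if i is i'.+1 then Q`_i' / i'.+1%:R else 0).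

Lemma antidE Q : (antid Q)^`() = Q.
Proof.
apply/polyP => i; rewrite coef_deriv coef_poly ltnS.
case: ltnP => hi.
  by rewrite -(mulr_natr (Q`_i / i.+1%:R)) divfK // pnatr_eq0.
by rewrite nth_default // -mulr_natr mul0r.
Qed.

Lemma size_antid Q : (size (antid Q) <= (size Q).+1)%N.
Proof. exact: size_poly. Qed.

Lemma nrm_antid Q : nrm (antid Q) <= nrm Q.
Proof.
rewrite -(nrm_pad (size_antid Q)) big_ord_recl coef_poly /= normr0 add0r.
apply: ler_sum => i _; rewrite coef_poly ltnS ltn_ord normrM.
rewrite -[X in _ <= X]mulr1; apply: ler_wpM2l => //.
rewrite normfV invf_le1 ?normr_gt0 ?pnatr_eq0 // ger0_norm // ler1n //.
Qed.

Lemma moment_bound n (X mu : nat -> R) (delta : R) P :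
  0 <= delta -> (size P <= n.+1)%N ->
  \sum_(0 <= j < n.+1) mu j = 0 ->
  (forall i, (1 <= i <= n)%N -> `|\sum_(0 <= j < n.+1) mu j * X j ^+ i| <= delta) ->
  `|\sum_(0 <= j < n.+1) mu j * P.[X j]| <= delta * nrm P.
Proof.
move=> d0 hs m0 hm.
under eq_bigr => j _ do rewrite horner_coef mulr_sumr.
rewrite exchange_big /=.
apply: le_trans (ler_norm_sum _ _ _) _.
rewrite /nrm mulr_sumr; apply: ler_sum => i _.
rewrite (_ : \sum_(0 <= j < n.+1) mu j * (P`_i * X j ^+ i) = P`_i * \sum_(0 <= j < n.+1) mu j * X j ^+ i); last first.
  by rewrite mulr_sumr; apply: eq_bigr => j _; rewrite mulrCA.
rewrite normrM mulrC; apply: ler_wpM2r => //.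
case: i => [[|i] hi] /=.
  under eq_bigr => j _ do rewrite expr0 mulr1.
  by rewrite m0 normr0.
apply: hm; rewrite /= -ltnS; exact: leq_trans hi hs.
Qed.
End Nrm.


Section Misc.
Variable R : realType.

Lemma abel (mu f : nat -> R) N :
  \sum_(0 <= j < N.+1) mu j * f j =
  (\sum_(0 <= j < N.+1) mu j) * f N
  - \sum_(0 <= m < N) (\sum_(0 <= j < m.+1) mu j) * (f m.+1 - f m).
Proof.
elim: N => [|N ih].
  by rewrite !big_nat1 big_geq // subr0.
rewrite big_nat_recr //= ih.
rewrite (@big_nat_recr _ _ _ N.+1 0 mu) //=.
rewrite (@big_nat_recr _ _ _ N 0 (fun m => (\sum_(0 <= j < m.+1) mu j) * (f m.+1 - f m))) //=.
ring.
Qed.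

Lemma parity (s : nat -> bool) N m : (m <= N)%N ->
  \prod_(j <- iota 1 N | s j.-1 != s j) ((-1 : R) ^+ (m < j)%N)
  = (-1) ^+ s N * (-1) ^+ s m.
Proof.
elim: N m => [|N ih] m.
  rewrite leqn0 => /eqP ->; rewrite big_nil -signr_addb addbb //.
rewrite leq_eqVlt => /orP [/eqP ->|].
  rewrite big1_seq; first by rewrite -signr_addb addbb.
  move=> j /andP [_]; rewrite mem_iota => /andP [_ hj].
  have : (j <= N.+1)%N by move: hj; rewrite add1n ltnS.
  by rewrite leqNgt => /negbTE ->.
rewrite ltnS => hm.
have -> : iota 1 N.+1 = iota 1 N ++ [:: N.+1].
  by rewrite -(addn1 N) iotaD /= add1n addn1.
rewrite big_cat /= ih // big_cons big_nil /= mulr1.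
rewrite ltnS hm.
case: (s N); case: (s N.+1); case: (s m) => /=; rewrite ?expr0 ?expr1 ?mulr1 ?mul1r ?mulrN ?mulNr ?opprK. all: by rewrite ?mulr1.
Qed.

Lemma poly_incr (H : {poly R}) a b c : a <= b ->
  (forall t, a < t -> t < b -> c <= H^`().[t]) -> c * (b - a) <= H.[b] - H.[a].
Proof.
rewrite le_eqVlt => /orP [/eqP ->|ab] h; first by rewrite !subrr mulr0.
have [c0 hc0 ->] := poly_mvt H ab.
move: hc0; rewrite in_itv /= => /andP [h1 h2].
by apply: ler_wpM2r; [rewrite subr_ge0 ltW | exact: h].
Qed.

Lemma sign_abs (d : R) : d = (-1) ^+ (d < 0)%R * `|d|.
Proof.
case: (ltP d 0) => h; first by rewrite expr1 ltr0_norm // mulN1r opprK.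
by rewrite expr0 mul1r ger0_norm.
Qed.
End Misc.


Section PolyBound.
Variables (R : realType) (n : nat) (X mu : nat -> R) (delta r : R).
Hypotheses (n1 : (1 <= n)%N) (Xmono : forall i, (i < n)%N -> X i <= X i.+1)
 (Xb : forall i, (i <= n)%N -> `|X i| <= 1)
 (Dn : \sum_(0 <= j < n.+1) mu j = 0)
 (Db : forall m, (m < n)%N -> `|\sum_(0 <= j < m.+1) mu j| <= 1)
 (hmom : forall i, (1 <= i <= n)%N -> `|\sum_(0 <= j < n.+1) mu j * X j ^+ i| <= delta)
 (d0 : 0 <= delta) (r0 : 0 < r) (r1 : r <= 1).

Lemma Xle i j : (i <= j)%N -> (j <= n)%N -> X i <= X j.
Proof.
elim: j => [|j ih] ij jn; first by move: ij; rewrite leqn0 => /eqP ->.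
move: ij; rewrite leq_eqVlt => /orP [/eqP ->|]; first by [].
rewrite ltnS => ij; apply: le_trans (ih ij (ltnW jn)) (Xmono jn).
Qed.

Definition Dm m := \sum_(0 <= j < m.+1) mu j.
Definition sb m := (Dm m < 0)%R.
Definition idx := [seq j <- iota 1 n.-1 | sb j.-1 != sb j].
Definition Qp := \prod_(j <- idx) ('X - (X j)%:P).
Definition eps : R := (-1) ^+ sb n.-1.
Definition Pp := eps *: antid Qp.

Lemma iota_mem j : j \in iota 1 n.-1 -> (1 <= j)%N && (j < n)%N.
Proof. by rewrite mem_iota add1n prednK. Qed.

Lemma idx_mem j : j \in idx -> (1 <= j)%N && (j < n)%N.
Proof. by rewrite mem_filter => /andP [_ /iota_mem]. Qed.

Lemma size_idx : (size idx <= n.-1)%N.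
Proof. by rewrite size_filter (leq_trans (count_size _ _)) // size_iota. Qed.

Lemma size_Pp : (size Pp <= n.+1)%N.
Proof.
apply: leq_trans (size_scale_leq _ _) _.
apply: leq_trans (size_antid _) _.
rewrite /Qp size_prod_XsubC !ltnS; apply: leq_ltn_trans size_idx _; by rewrite ltn_predL.
Qed.

Lemma nrm_Pp : nrm Pp <= 2 ^+ size idx.
Proof.
rewrite /Pp nrm_scale /eps normr_sign mul1r.
apply: le_trans (nrm_antid _) _.
rewrite /Qp -(big_map X xpredT (fun c => 'X - c%:P)).
rewrite -(size_map X idx); apply: nrm_prod => c /mapP [j /idx_mem /andP [_ hj] ->].
by apply: Xb; apply: ltnW.
Qed.

Lemma dPp : Pp^`() = eps *: Qp.
Proof. by rewrite /Pp derivZ antidE. Qed.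

Lemma key m t j : (m < n)%N -> X m < t -> t < X m.+1 -> j \in iota 1 n.-1 ->
  t - X j = (-1) ^+ (m < j)%N * `|t - X j|.
Proof.
move=> mn h1 h2 /iota_mem /andP [_ jn].
case: (ltnP m j) => mj.
  have : X m.+1 <= X j by apply: Xle => //; exact: ltnW.
  move=> h; rewrite ltr0_norm ?expr1 ?mulN1r ?opprK //; lra.
have : X j <= X m by apply: Xle => //; exact: ltnW.
move=> h; rewrite ger0_norm ?expr0 ?mul1r //; lra.
Qed.

Lemma Qp_sign m t : (m < n)%N -> X m < t -> t < X m.+1 ->
  eps * (-1) ^+ sb m * Qp.[t] = \prod_(j <- idx) `|t - X j|.
Proof.
move=> mn h1 h2.
rewrite /Qp horner_prod /idx !big_filter big_seq_cond [RHS]big_seq_cond.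
under eq_bigr => j /andP [hj _] do rewrite hornerXsubC (key mn h1 h2 hj).
rewrite big_split /= -big_seq_cond parity; last by rewrite -ltnS prednK.
rewrite /eps.
case: (sb n.-1); case: (sb m) => /=; rewrite ?expr0 ?expr1 ?mulr1 ?mul1r ?mulrN ?mulNr ?opprK ?mulr1 //.
all: by rewrite ?mul1r ?mulN1r ?opprK ?mulrN ?mul1r ?opprK.
Qed.

Lemma prod_lb (l : seq nat) (F : nat -> R) : (forall j, j \in l -> r <= F j) ->
  r ^+ size l <= \prod_(j <- l) F j.
Proof.
elim: l => [|j l ih] h; first by rewrite big_nil expr0.
rewrite big_cons exprS /=; apply: ler_pM.
- exact: ltW.
- by rewrite exprn_ge0 // ltW.
- by apply: h; rewrite mem_head.
by apply: ih => i hi; apply: h; rewrite in_cons hi orbT.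
Qed.

Lemma Qp_lb m t : (m < n)%N -> X m + r <= t -> t <= X m.+1 - r ->
  r ^+ size idx <= \prod_(j <- idx) `|t - X j|.
Proof.
move=> mn h1 h2; apply: prod_lb => j /idx_mem /andP [_ jn].
case: (ltnP m j) => mj.
  have : X m.+1 <= X j by apply: Xle => //; exact: ltnW.
  move=> h; rewrite distrC; apply: le_trans (ler_norm _); lra.
have : X j <= X m by apply: Xle => //; exact: ltnW.
move=> h; apply: le_trans (ler_norm _); lra.
Qed.

Lemma gap_bound m : (m < n)%N ->
  `|Dm m| * (X m.+1 - X m) <=
  Dm m * (Pp.[X m.+1] - Pp.[X m]) / r ^+ size idx + 2 * r * `|Dm m|.
Proof.
move=> mn.
have r0' := r0; have r1' := r1.
have g0 : X m <= X m.+1 by exact: Xmono.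
pose H := (-1) ^+ sb m *: Pp.
have dH : forall t, X m < t -> t < X m.+1 -> H^`().[t] = \prod_(j <- idx) `|t - X j|.
  move=> t h1 h2; rewrite /H derivZ dPp !hornerZ -(Qp_sign mn h1 h2); ring.
have eqD : Dm m * (Pp.[X m.+1] - Pp.[X m]) = `|Dm m| * (H.[X m.+1] - H.[X m]).
  rewrite {1}(sign_abs (Dm m)) /H !hornerZ /sb; ring.
have rk : 0 < r ^+ size idx by rewrite exprn_gt0.
have Dabs := normr_ge0 (Dm m).
have H0 : forall a b, X m <= a -> a <= b -> b <= X m.+1 -> 0 <= H.[b] - H.[a].
  move=> a b ha ab hb; rewrite -(mul0r (b - a)); apply: poly_incr => // t t1 t2.
  by rewrite dH ?prodr_ge0 //; lra.
rewrite eqD.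
case: (lerP (X m.+1 - X m) (2 * r)) => hg.
  have A0 : 0 <= `|Dm m| * (H.[X m.+1] - H.[X m]) / r ^+ size idx.
    apply: divr_ge0; last exact: ltW. apply: mulr_ge0 => //. apply: H0; lra.
  have := ler_wpM2l Dabs hg; nra.
have {}hg : 2 * r < X m.+1 - X m := hg.
have t1 : X m <= X m.+1 - r by lra.
have t2 : X m.+1 - r <= X m.+1 by lra.
have h1 := H0 _ _ t1 t2 (lexx _).
have t3 : X m + r <= X m.+1 by lra.
have t4 : X m <= X m + r by lra.
have h3 := H0 _ _ (lexx _) t4 t3.
have ab : X m + r <= X m.+1 - r by lra.
have h2 : r ^+ size idx * ((X m.+1 - r) - (X m + r)) <= H.[X m.+1 - r] - H.[X m + r].
  apply: (poly_incr ab) => t u1 u2.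
  have {}u1 : X m + r < t := u1.
  have {}u2 : t < X m.+1 - r := u2.
  rewrite dH; [apply: (@Qp_lb m) => //; lra | lra | lra].
have h4 : X m.+1 - X m - 2 * r <= (H.[X m.+1] - H.[X m]) / r ^+ size idx.
  rewrite ler_pdivlMr //; nra.
have := ler_wpM2l Dabs h4; rewrite mulrA; nra.
Qed.

Lemma poly_bound :
  \sum_(0 <= m < n) (X m.+1 - X m) * `|Dm m| <= delta * (2 / r) ^+ n.-1 + 2 * r * n%:R.
Proof.
have r0' := r0; have r1' := r1; have d0' := d0.
apply: (@le_trans _ _ (\sum_(0 <= m < n)
   (Dm m * (Pp.[X m.+1] - Pp.[X m]) / r ^+ size idx + 2 * r * `|Dm m|))).
  by apply: ler_sum_nat => m /andP [_ mn]; rewrite mulrC gap_bound.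
rewrite big_split /= -mulr_suml -mulr_sumr.
have ab := abel mu (fun j => Pp.[X j]) n.
rewrite Dn mul0r sub0r in ab.
have -> : \sum_(0 <= m < n) Dm m * (Pp.[X m.+1] - Pp.[X m])
   = - \sum_(0 <= j < n.+1) mu j * Pp.[X j] by rewrite ab opprK.
have mb := moment_bound d0 size_Pp Dn hmom.
have sD : \sum_(0 <= m < n) `|Dm m| <= n%:R.
  apply: (@le_trans _ _ (\sum_(0 <= m < n) (1 : R))).
    by apply: ler_sum_nat => m /andP [_ mn]; exact: Db.
  by rewrite sumr_const_nat subn0.
have rk : 0 < r ^+ size idx by rewrite exprn_gt0.
have e1 : - (\sum_(0 <= j < n.+1) mu j * Pp.[X j]) / r ^+ size idx <= delta * (2 / r) ^+ n.-1.
  rewrite ler_pdivrMr //.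
  apply: le_trans (ler_norm _) _; rewrite normrN.
  apply: le_trans mb _.
  apply: (@le_trans _ _ (delta * 2 ^+ size idx)); first by apply: ler_wpM2l => //; exact: nrm_Pp.
  rewrite -mulrA; apply: ler_wpM2l => //.
  have two : 1 <= 2 / r by rewrite ler_pdivlMr // mul1r; lra.
  apply: (@le_trans _ _ ((2 / r) ^+ size idx * r ^+ size idx)).
    by rewrite -exprMn divfK ?gt_eqF.
  apply: ler_wpM2r; first exact: ltW.
  apply: ler_weXn2l => //; exact: size_idx.
have := ler_wpM2l (ltW (mulr_gt0 (ltr0Sn _ 1) r0)) sD; lra.
Qed.
End PolyBound.


Section W1lemmas.
Variable R : realType.

Lemma W1_le l (x p q : 'I_l -> R) pi c : is_coupling p q pi ->
  \sum_(j < l) \sum_(k < l) pi j k * `|x j - x k| <= c -> W1 x p q <= c.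
Proof.
move=> hpi hc; rewrite /W1.
have lb : has_lbound [set c : R | exists pi, is_coupling p q pi /\
         c = \sum_(j < l) \sum_(k < l) pi j k * `|x j - x k| ].
  exists 0 => y [pi' [[h0 _] ->]].
  by apply: sumr_ge0 => j _; apply: sumr_ge0 => k _; apply: mulr_ge0.
apply: le_trans (ge_inf lb _) hc; by exists pi.
Qed.

Lemma transfer n (s : {perm 'I_n.+1}) (x p q : 'I_n.+1 -> R) pi :
  is_coupling (p \o s) (q \o s) pi ->
  exists pi', is_coupling p q pi' /\
    \sum_(j < n.+1) \sum_(k < n.+1) pi' j k * `|x j - x k| =
    \sum_(j < n.+1) \sum_(k < n.+1) pi j k * `|(x \o s) j - (x \o s) k|.
Proof.
move=> [h0 [h1 h2]].
exists (fun j k => pi (s^-1 j)%g (s^-1 k)%g); split; [split; [|split]|].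
- by move=> j k; apply: h0.
- move=> j; rewrite (reindex_inj (@perm_inj _ s)) /=.
  under eq_bigr => k _ do rewrite permK.
  by rewrite h1 /= permKV.
- move=> k; rewrite (reindex_inj (@perm_inj _ s)) /=.
  under eq_bigr => j _ do rewrite permK.
  by rewrite h2 /= permKV.
rewrite (reindex_inj (@perm_inj _ s)) /=; apply: eq_bigr => j _.
rewrite (reindex_inj (@perm_inj _ s)) /=; apply: eq_bigr => k _.
by rewrite !permK.
Qed.

Lemma sort_perm n (x : 'I_n.+1 -> R) : exists s : {perm 'I_n.+1},
  forall i j : 'I_n.+1, (i <= j)%N -> x (s i) <= x (s j).
Proof.
pose leT := fun i j : 'I_n.+1 => x i <= x j.
pose sq := sort leT (enum 'I_n.+1).
have ssz : size sq = n.+1 by rewrite size_sort size_enum_ord.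
have su : uniq sq by rewrite sort_uniq enum_uniq.
have ss : sorted leT sq by apply: sort_sorted => i j; exact: le_total.
pose f := fun i : 'I_n.+1 => nth ord0 sq i.
have finj : injective f.
  move=> i j /eqP; rewrite /f nth_uniq ?ssz // => /eqP; exact: val_inj.
exists (perm finj) => i j ij; rewrite !permE /f.
have := @sorted_leq_nth _ leT _ _ ord0 sq ss i j.
apply; rewrite ?inE ?ssz //.
- by move=> a b c; exact: le_trans.
- by move=> a; exact: lexx.
Qed.
End W1lemmas.


Section Core.
Variable R : realType.

Lemma sorted_core n (x p q : 'I_n.+1 -> R) (delta : R) :
  (1 <= n)%N -> (forall i j : 'I_n.+1, (i <= j)%N -> x i <= x j) ->
  (forall j, -1 <= x j <= 1) -> is_prob p -> is_prob q ->
  (forall i : nat, (1 <= i <= n)%N -> `|moment x p i - moment x q i| <= delta) ->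
  exists pi, is_coupling p q pi /\
    \sum_(j < n.+1) \sum_(k < n.+1) pi j k * `|x j - x k| <= 2 /\
    forall r, 0 < r -> r <= 1 ->
    \sum_(j < n.+1) \sum_(k < n.+1) pi j k * `|x j - x k|
      <= delta * (2 / r) ^+ n.-1 + 2 * r * n%:R.
Proof.
move=> n1 xm xb pp pq hm.
exists (pic p q); split; first exact: pic_coupling.
rewrite (pic_cost pp pq xm).
pose X := fun m => x (inord m).
pose mu := fun j => p (inord j) - q (inord j).
have eD : forall m, cum p m.+1 - cum q m.+1 = Dm mu m.
  by move=> m; rewrite /Dm /cum -sumrB.
under eq_bigr => m _ do rewrite eD.
have Xmono : forall i, (i < n)%N -> X i <= X i.+1.
  move=> i hi; apply: xm; rewrite !inordK //; exact: ltnW.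
have Xb : forall i, (i <= n)%N -> `|X i| <= 1.
  by move=> i _; rewrite ler_norml xb.
have Dn : \sum_(0 <= j < n.+1) mu j = 0.
  by rewrite /mu sumrB -!sumI pp.2 pq.2 subrr.
have Db : forall m, (m < n)%N -> `|\sum_(0 <= j < m.+1) mu j| <= 1.
  move=> m mn; rewrite -[\sum_(0 <= j < m.+1) mu j]/(Dm mu m) -eD.
  have h1 := cum_ge0 pp m.+1; have h2 := cum_ge0 pq m.+1.
  have h3 := cum_le1 pp (leqW mn); have h4 := cum_le1 pq (leqW mn).
  rewrite ler_norml; apply/andP; split; lra.
have hmom : forall i, (1 <= i <= n)%N ->
    `|\sum_(0 <= j < n.+1) mu j * X j ^+ i| <= delta.
  move=> i hi; have := hm i hi; rewrite /moment !sumI -sumrB.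
  suff -> : \sum_(0 <= j < n.+1) mu j * X j ^+ i =
    \sum_(0 <= j < n.+1) (p (inord j) * x (inord j) ^+ i - q (inord j) * x (inord j) ^+ i) by [].
  by apply: eq_bigr => j _; rewrite /mu /X mulrBl.
have d0 : 0 <= delta.
  by apply: le_trans (hmom 1%N _); rewrite ?normr_ge0 // n1.
split.
  apply: (@le_trans _ _ (\sum_(0 <= m < n) gap x m)).
    apply: ler_sum_nat => m /andP [_ mn]; rewrite /gap.
    rewrite -[X in _ <= X]mulr1; apply: ler_wpM2l; last exact: Db.
    by rewrite subr_ge0; exact: Xmono.
  rewrite /gap (telescope_sumr (fun i => x (inord i))) //.
  have := xb (inord n); have := xb (inord 0); lra.
move=> r r0 r1.
exact: (poly_bound n1 Xmono Xb Dn Db hmom d0 r0 r1).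
Qed.
End Core.

Section Main.
Variable R : realType.

Lemma moment_perm n (s : {perm 'I_n.+1}) (x p : 'I_n.+1 -> R) i :
  moment (x \o s) (p \o s) i = moment x p i.
Proof. by rewrite /moment [RHS](reindex_inj (@perm_inj _ s)). Qed.

Lemma prob_perm n (s : {perm 'I_n.+1}) (p : 'I_n.+1 -> R) :
  is_prob p -> is_prob (p \o s).
Proof.
move=> [h0 h1]; split; first by move=> j; apply: h0.
by rewrite -h1 [RHS](reindex_inj (@perm_inj _ s)).
Qed.

Lemma main_bound (n : nat) (w delta : R) :
  0 <= delta -> w <= 2 ->
  (forall r, 0 < r -> r <= 1 -> w <= delta * (2 / r) ^+ n + 2 * r * n.+1%:R) ->
  w <= 5 * n.+2%:R * powR delta (n.+1%:R)^-1.
Proof.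
move=> d0 w2 wr.
set a := powR delta _.
have a0 : 0 <= a by apply: powR_ge0.
have aN : a ^+ n.+1 = delta.
  rewrite /a -powR_mulrn ?powR_ge0 // -powRrM mulVf ?pnatr_eq0 // powRr1 //.
have K0 : 0 < n.+1%:R :> R by rewrite ltr0n.
have K2 : n.+2%:R = n.+1%:R + 1 :> R by rewrite -natr1.
rewrite K2.
case: (lerP (2^-1) a) => ha.
  apply: (le_trans w2); nra.
case: (ltrgt0P a) => ha0; first last.
-
  rewrite ha0 mulr0.
  have d00 : delta = 0 by rewrite -aN ha0 expr0n.
  rewrite d00 in wr.
  case: (lerP w 0) => // wpos.
  pose r := w / (w + 4 * n.+1%:R).
  have hd : 0 < w + 4 * n.+1%:R by nra.
  have r0 : 0 < r by rewrite /r divr_gt0.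
  have r1 : r <= 1 by rewrite /r ler_pdivrMr //; nra.
  have := wr r r0 r1; rewrite mul0r add0r /r.
  have e : 2 * (w / (w + 4 * n.+1%:R)) * n.+1%:R
     = (2 * w * n.+1%:R) / (w + 4 * n.+1%:R) by rewrite !mulrA mulrAC.
  rewrite e ler_pdivlMr //; nra.
- by move: ha0; rewrite ltNge a0.
have r0 : 0 < 2 * a by nra.
have r1 : 2 * a <= 1 by nra.
have := wr _ r0 r1.
have -> : 2 / (2 * a) = a^-1 by rewrite invfM mulrA divff ?mul1r // pnatr_eq0.
rewrite -aN exprS -mulrA exprVn mulfV ?expf_neq0 ?gt_eqF // mulr1.
nra.
Qed.
End Main.

Unset Implicit Arguments.
Theorem proposition10 (R : realType) :
  exists C : R, 0 < C /\
  forall (l : nat) (x p q : 'I_l -> R) (delta : R),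
    (2 <= l)%N ->
    injective x ->
    (forall j, -1 <= x j <= 1) ->
    is_prob p -> is_prob q ->
    (forall j, 0 < p j \/ 0 < q j) ->
    (forall i : nat, (1 <= i <= l - 1)%N ->
       `|moment x p i - moment x q i| <= delta) ->
    W1 x p q <= C * l%:R * powR delta (l.-1%:R)^-1.
Proof.
exists 5; split; first by rewrite ltr0n.
move=> [|[|n]] x p q delta hl _ xb pp pq _ hm //.
have [s hs] := sort_perm x.
have hm' : forall i, (1 <= i <= n.+1)%N ->
    `|moment (x \o s) (p \o s) i - moment (x \o s) (q \o s) i| <= delta.
  by move=> i hi; rewrite !moment_perm; apply: hm; rewrite subn1.
have xb' : forall j, -1 <= (x \o s) j <= 1 by move=> j; apply: xb.
have [pi [hpi [c2 cr]]] := @sorted_core R n.+1 (x \o s) (p \o s) (q \o s) delta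
   (ltn0Sn n) hs xb' (prob_perm s pp) (prob_perm s pq) hm'.
have [pi' [hpi' ceq]] := @transfer R n.+1 s x p q pi hpi.
have d0 : 0 <= delta.
  by apply: le_trans (hm 1%N _); rewrite ?normr_ge0 // subn1.
apply: main_bound => //.
  by apply: (W1_le hpi'); rewrite ceq.
by move=> r r0 r1; apply: (W1_le hpi'); rewrite ceq; exact: cr.
Qed.
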